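(* Let $k_1,\dots,k_i$ be positive integers with $k_1+\dots+k_i=2k$ and let $c=(i_1,j_1),\dots,(i_k,j_k)$ be an oriented chord diagram on $\{1,\dots,2k\}$. Then, as elements of the graph space $\mathcal{G}$ (where $(\Gamma,-\omega)=-(\Gamma,\omega)$): (i) if $\tau=(i_r\ j_r)\in S_{2k}$ for some $1\le r\le k$, then $\Gamma_{k_1,\dots,k_i}(\tau\cdot c)=-\Gamma_{k_1,\dots,k_i}(c)$; (ii) if $\sigma=(\sigma_1,\dots,\sigma_i)\in S_{k_1}\times\dots\times S_{k_i}\subset S_{2k}$ (each $\sigma_r$ permuting the $r$-th consecutive block of $\{1,\dots,2k\}$ of size $k_r$), then $\Gamma_{k_1,\dots,k_i}(\sigma\cdot c)=\Gamma_{k_1,\dots,k_i}(c)$; (iii) if $\sigma\in S_i$, then $\Gamma_{k_{\sigma(1)},\dots,k_{\sigma(i)}}\big((\sigma_{(k_1,\dots,k_i)})^{-1}\cdot c\big)=\operatorname{sgn}(\sigma)\,\Gamma_{k_1,\dots,k_i}(c)$.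
   Context: $S_{2k}$ acts on oriented chord diagrams by $\sigma\cdot((i_1,j_1),\dots,(i_k,j_k))=((\sigma(i_1),\sigma(j_1)),\dots,(\sigma(i_k),\sigma(j_k)))$. For $\sigma\in S_i$, let $B_1,\dots,B_i$ be the consecutive blocks of $\{1,\dots,2k\}$ of sizes $k_1,\dots,k_i$ and $B'_1,\dots,B'_i$ the consecutive blocks of sizes $k_{\sigma(1)},\dots,k_{\sigma(i)}$; $\sigma_{(k_1,\dots,k_i)}\in S_{2k}$ maps the $a$-th element of $B'_t$ to the $a$-th element of $B_{\sigma(t)}$ (the block permutation $V^{\otimes k_1}\otimes\cdots\otimes V^{\otimes k_i}\to V^{\otimes k_{\sigma(1)}}\otimes\cdots\otimes V^{\otimes k_{\sigma(i)}}$). Oriented graph $\Gamma_{k_1,\dots,k_i}(c)$: half-edges $h_1,\dots,h_{2k}$; vertices $\{h_1,\dots,h_{k_1}\},\{h_{k_1+1},\dots,h_{k_1+k_2}\},\dots,\{h_{k_1+\dots+k_{i-1}+1},\dots,h_{2k}\}$; edges $(h_{i_1},h_{j_1}),\dots,(h_{i_k},h_{j_k})$; orientation given by the vertex ordering as listed and the edge orientations as listed. Graphs, orientations and the space $\mathcal{G}$: a graph is a finite set of half-edges with a partition into vertices and a partition into two-element edges; an orientation is a class of (vertex ordering, ordering within each edge) modulo simultaneous changes of total sign $+1$ (sign of the vertex permutation times $(-1)$ per flipped edge); $\mathcal{G}$ is spanned by isomorphism classes of oriented graphs modulo $(\Gamma,-\omega)=-(\Gamma,\omega)$. *)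

(* Defs.v *)
From mathcomp Require Import all_boot all_order all_algebra fingroup perm.
Set Implicit Arguments. Unset Strict Implicit. Unset Printing Implicit Defensive.
Import GRing.Theory.
Local Open Scope ring_scope.

(* Half-edges are 'I_nh.  Vertices are 0,...,nv-1 (their order being the     *)
(* vertex ordering of the orientation); vtx h is the vertex of half-edge h.  *)
(* The edges are the orbits {h, inv h} of the fixed-point-free involution    *)
(* inv; the edge {h, inv h} is oriented as (h, inv h) iff h \in src.         *)
Record ograph := OGraph {
  nh  : nat;
  nv  : nat;
  vtx : 'I_nh -> nat;
  inv : 'I_nh -> 'I_nh;
  src : {set 'I_nh} }.
Arguments vtx : clear implicits.
Arguments inv : clear implicits.
Arguments src : clear implicits.

Definition ograph_wf (X : ograph) : Prop :=
  [/\ (forall h, (vtx X h < nv X)%N),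
      (forall a, (a < nv X)%N -> exists h, vtx X h = a),
      (forall h, inv X (inv X h) = h /\ inv X h != h) &
      (forall h, (h \in src X) != (inv X h \in src X))].

Definition giso (X Y : ograph) (phi : 'I_(nh X) -> 'I_(nh Y)) (pi : nat -> nat)
  : Prop :=
  [/\ bijective phi, nv X = nv Y,
      ({in [pred a | (a < nv X)%N] &, injective pi} /\
       (forall a, (a < nv X)%N -> (pi a < nv Y)%N)),
      (forall h, vtx Y (phi h) = pi (vtx X h)) &
      (forall h, inv Y (phi h) = phi (inv X h))].

Arguments giso : clear implicits.

(* number of inversions of pi on {0..m-1}: parity = sign of the permutation *)
Definition ninv (pi : nat -> nat) (m : nat) : nat :=
  (\sum_(a < m) \sum_(b < m) ((a < b) && (pi b < pi a))%N)%N.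

(* parity of the orientation change: sign(pi) * (-1)^(#flipped edges) *)
Definition gsign_exp (X Y : ograph) (phi : 'I_(nh X) -> 'I_(nh Y))
  (pi : nat -> nat) : nat :=
  (ninv pi (nv X) + #|[set h in src X | phi h \notin src Y]|)%N.

Arguments gsign_exp : clear implicits.

(* Linear functionals on the graph space G (over Q) are exactly the functions *)
(* on oriented graphs that are invariant under isomorphism and change sign    *)
(* under reversal of the orientation.                                         *)
Definition Gfunctional (f : ograph -> rat) : Prop :=
  forall X Y (phi : 'I_(nh X) -> 'I_(nh Y)) (pi : nat -> nat), ograph_wf X -> ograph_wf Y -> giso X Y phi pi ->
    f Y = (-1) ^+ gsign_exp X Y phi pi * f X.

(* Equality  X = e * Y  in the graph space G. *)
Definition Geq (X : ograph) (e : rat) (Y : ograph) : Prop :=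
  forall f, Gfunctional f -> f X = e * f Y.

(* An oriented chord diagram on {0..n-1} (0-indexed) : a list of ordered pairs *)
Definition chord_diagram (n k : nat) (c : seq ('I_n * 'I_n)) : Prop :=
  size c = k /\ uniq (flatten [seq [:: p.1; p.2] | p <- c]) /\ n = (2 * k)%N.

Definition cd_act n (s : 'S_n) (c : seq ('I_n * 'I_n)) : seq ('I_n * 'I_n) :=
  [seq (s p.1, s p.2) | p <- c].

Definition partner n (c : seq ('I_n * 'I_n)) (h : 'I_n) : 'I_n :=
  let p := nth (h, h) c (find (fun p => (p.1 == h) || (p.2 == h)) c) in
  if p.1 == h then p.2 else p.1.

Definition cd_src n (c : seq ('I_n * 'I_n)) : {set 'I_n} :=
  [set x | x \in [seq p.1 | p <- c]].

(* index (from 0) of the consecutive block of sizes ks containing h *)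
Definition blk (ks : seq nat) (h : nat) : nat :=
  count (fun r => sumn (take r.+1 ks) <= h)%N (iota 0 (size ks)).

Definition Gamma n (ks : seq nat) (c : seq ('I_n * 'I_n)) : ograph :=
  @OGraph n (size ks) (fun h => blk ks h) (partner c) (cd_src c).

(* Main.v *)
Require Import Defs.
From mathcomp Require Import all_boot all_order all_algebra fingroup perm.
From mathcomp Require Import zify.
Module Helpers.
Set Implicit Arguments. Unset Strict Implicit. Unset Printing Implicit Defensive.

Section Chord.
Variable n : nat.
Implicit Types (c : seq ('I_n * 'I_n)).

Definition fl c := flatten [seq [:: p.1; p.2] | p <- c].

Lemma mem_fl c x : (x \in fl c) = has (fun q => (q.1 == x) || (q.2 == x)) c.
Proof.
elim: c => //= q c IH.
by rewrite mem_cat !inE IH (eq_sym q.1) (eq_sym q.2) -orbA.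
Qed.

Lemma uniq_pair c q q' x : uniq (fl c) -> q \in c -> q' \in c ->
  (q.1 == x) || (q.2 == x) -> (q'.1 == x) || (q'.2 == x) -> q = q'.
Proof.
elim: c => //= a c IH /and3P [h1 h2 uc]; rewrite -/(fl c) in h1 h2 uc.
have nin y : (a.1 == y) || (a.2 == y) -> y \in fl c -> False.
  case/orP => /eqP <- hy; first by move: h1; rewrite inE hy orbT.
  by move: h2; rewrite hy.
rewrite !inE => /orP [/eqP-> | qc] /orP [/eqP-> | q'c] hx hx' //.
- by exfalso; apply: (nin x hx); rewrite mem_fl; apply/hasP; exists q'.
- by exfalso; apply: (nin x hx'); rewrite mem_fl; apply/hasP; exists q.
- exact: IH.
Qed.

Lemma pair_neq c q : uniq (fl c) -> q \in c -> q.1 != q.2.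
Proof.
elim: c => //= a c IH /and3P [h1 h2 uc]; rewrite -/(fl c) in h1 h2 uc.
rewrite inE => /orP [/eqP-> | qc]; last exact: IH.
by apply/eqP => e; move: h1; rewrite e inE eqxx.
Qed.

Lemma partner_pair c q : uniq (fl c) -> q \in c ->
  partner c q.1 = q.2 /\ partner c q.2 = q.1.
Proof.
move=> u qc.
have key x : (q.1 == x) || (q.2 == x) ->
    nth (x, x) c (find (fun p => (p.1 == x) || (p.2 == x)) c) = q.
  move=> hx.
  have hh : has (fun p => (p.1 == x) || (p.2 == x)) c by apply/hasP; exists q.
  apply: (uniq_pair (x := x) u) => //.
    by apply: mem_nth; rewrite -has_find.
  exact: (nth_find (x, x) hh).
rewrite /partner !key ?eqxx ?orbT //.
by rewrite (negbTE (pair_neq u qc)).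
Qed.

Lemma cdcover c : uniq (fl c) -> size (fl c) = n -> forall h : 'I_n,
  exists2 q, q \in c & (q.1 = h) \/ (q.2 = h).
Proof.
move=> u sz h.
have : h \in fl c.
  have e : #|fl c| = #|'I_n| by rewrite card_ord (card_uniqP u).
  by move/subset_cardP: e => /(_ (subset_predT _)) ->.
rewrite mem_fl => /hasP [q qc /orP [] /eqP hq]; exists q => //; tauto.
Qed.

Lemma fl_act (g : 'S_n) c : fl (cd_act g c) = map g (fl c).
Proof. elim: c => //= a c IH. move: IH; rewrite /fl /cd_act /= => ->. by []. Qed.

Lemma partner_act (g : 'S_n) c h : uniq (fl c) -> size (fl c) = n ->
  partner (cd_act g c) (g h) = g (partner c h).
Proof.
move=> u sz; have [q qc hq] := cdcover u sz h.
have u' : uniq (fl (cd_act g c)) by rewrite fl_act (map_inj_uniq (@perm_inj _ g)).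
have qc' : (g q.1, g q.2) \in cd_act g c by apply: (map_f (fun p => (g p.1, g p.2))).
have [e1 e2] := partner_pair u' qc'; have [f1 f2] := partner_pair u qc.
by case: hq => <-; rewrite /= ?e1 ?e2 ?f1 ?f2.
Qed.

Lemma src_pair c q : uniq (fl c) -> q \in c ->
  (q.1 \in cd_src c) /\ (q.2 \notin cd_src c).
Proof.
move=> u qc; rewrite !inE; split; first by apply: map_f.
apply/mapP => -[q' q'c e].
have := uniq_pair (x := q.2) u qc q'c; rewrite e eqxx !orbT => /(_ isT isT) E.
by move: (pair_neq u qc); rewrite e E eqxx.
Qed.

End Chord.

Lemma sumn_take_le (s : seq nat) i j : i <= j -> sumn (take i s) <= sumn (take j s).
Proof. by move=> ij; rewrite -(subnKC ij) takeD sumn_cat leq_addr. Qed.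

Lemma sumn_takeS (s : seq nat) t : t < size s ->
  sumn (take t.+1 s) = sumn (take t s) + nth 0 s t.
Proof. by move=> ts; rewrite (take_nth 0 ts) -cats1 sumn_cat /= addn0. Qed.

Lemma count_lt_iota t m : t <= m -> count (fun r => r < t) (iota 0 m) = t.
Proof.
move=> tm; rewrite -(subnKC tm) iotaD count_cat add0n.
rewrite (eq_in_count (a2 := predT)); last by move=> r; rewrite mem_iota.
rewrite count_predT size_iota (eq_in_count (a2 := pred0)).
  by rewrite count_pred0 addn0.
by move=> r; rewrite mem_iota /=; case/andP => h _; rewrite ltnNge h.
Qed.

Lemma blk_eq ks t x : t < size ks -> x < nth 0 ks t ->
  blk ks (sumn (take t ks) + x) = t.
Proof.
move=> ts xt; rewrite /blk -[RHS](count_lt_iota (ltnW ts)).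
apply: eq_in_count => r; rewrite mem_iota add0n => /= rs.
case: (ltnP r t) => rt.
  by apply: leq_trans (leq_addr _ _); apply: sumn_take_le.
apply/negbTE; rewrite -ltnNge.
have := sumn_take_le ks (rt : t < r.+1); rewrite sumn_takeS //; lia.
Qed.

Lemma decomp ks h : h < sumn ks ->
  exists t a, [/\ t < size ks, a < nth 0 ks t & h = sumn (take t ks) + a].
Proof.
elim: ks h => //= x ks IH h hs.
case: (ltnP h x) => hx; first by exists 0, h.
have [t [a [ts ta e]]] : exists t a, [/\ t < size ks, a < nth 0 ks t & h - x = sumn (take t ks) + a].
  apply: IH; lia.
exists t.+1, a; split => //=; lia.
Qed.

Lemma blk_lt ks h : h < sumn ks -> blk ks h < size ks.
Proof. by move/decomp => [t [a [ts ta ->]]]; rewrite blk_eq. Qed.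

Definition ninvP m (s : 'S_m) : nat :=
  \sum_(a < m) \sum_(b < m) ((a < b) && (s b < s a)).

Lemma sum_ge m j : \sum_(x < m) (j <= x) = m - j.
Proof.
elim: m => [|m IH]; first by rewrite big_ord0.
rewrite big_ord_recr /= IH; case: leqP => /= h; lia.
Qed.

Lemma lt_lift m (j : 'I_m.+1) (x y : 'I_m) : (lift j x < lift j y) = (x < y).
Proof. rewrite /= /bump; do 2 case: leqP => ? /=; lia. Qed.

Lemma odd_ninvP m (s : 'S_m) : odd (ninvP s) = odd_perm s.
Proof.
elim: m s => [|m IH] s.
  rewrite /ninvP big_ord0 /=.
  have -> : s = 1%g by apply/permP => -[].
  by rewrite odd_perm1.
set j := s ord_max.
pose f k := odflt k (unlift j (s (lift ord_max k))).
have fK k : lift j (f k) = s (lift ord_max k).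
  rewrite /f; have := neq_lift ord_max k.
  by rewrite -(can_eq (permK s)) => /unlift_some[] ? ? ->.
have f_inj : injective f.
  by move=> a b e; apply: (@lift_inj _ ord_max); apply: (@perm_inj _ s); rewrite -!fK e.
pose s' := perm f_inj.
have Es : s = lift_perm ord_max j s'.
  apply/permP=> k; case: (unliftP ord_max k) => [k'|] ->; rewrite ?lift_perm_id //.
  by rewrite lift_perm_lift permE fK.
have hs' : ninvP s = ninvP s' + (m - j).
  rewrite /ninvP big_ord_recr /= [X in _ + X]big1 ?addn0; last first.
    by move=> b _; rewrite ltnNge -ltnS ltn_ord.
  under eq_bigr => a _ do rewrite big_ord_recr /=.
  rewrite big_split /= -sum_ge [X in _ = _ + X](reindex_inj (@perm_inj _ s')).
  have wl x : widen_ord (leqnSn m) x = lift ord_max x by apply: val_inj; rewrite /= /bump leqNgt ltn_ord.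
  congr (_ + _); apply: eq_bigr => a _.
    apply: eq_bigr => b _.
    rewrite !wl !Es !lift_perm_lift lt_lift.
    by congr (_ && _); rewrite /= /bump !leqNgt !ltn_ord.
  rewrite !wl Es lift_perm_lift lift_perm_id ltn_ord /= /bump.
  case: (leqP j (s' a)) => h /=; first by rewrite add1n ltnS h.
  by rewrite add0n ltnNge (ltnW h).
rewrite hs' oddD oddB; last by rewrite -ltnS ltn_ord.
rewrite IH Es odd_lift_perm /=.
by rewrite addbC addbA.
Qed.

Lemma size_fl n (c : seq ('I_n * 'I_n)) : size (fl c) = 2 * size c.
Proof. elim: c => //= a c IH; rewrite -/(fl c) IH; lia. Qed.

Lemma wf_Gamma n (ks : seq nat) (c : seq ('I_n * 'I_n)) :
  all (fun x => 0 < x) ks -> sumn ks = n -> uniq (fl c) -> size (fl c) = n ->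
  ograph_wf (Gamma ks c).
Proof.
move=> pos sum u sz; split => /=.
- by move=> h; apply: blk_lt; rewrite sum ltn_ord.
- move=> a ha.
  have pa : 0 < nth 0 ks a by apply: (allP pos); apply: mem_nth.
  have lt : sumn (take a ks) < n.
    rewrite -sum -{2}(take_size ks).
    apply: leq_trans (sumn_take_le ks ha); rewrite sumn_takeS //; lia.
  exists (Ordinal lt); by rewrite /= -[sumn _]addn0 blk_eq.
- move=> h; have [q qc hq] := cdcover u sz h; have [e1 e2] := partner_pair u qc.
  have ne := pair_neq u qc.
  by case: hq => <-; rewrite ?e1 ?e2; split => //; rewrite eq_sym.
- move=> h; have [q qc hq] := cdcover u sz h; have [e1 e2] := partner_pair u qc.
  have [s1 s2] := src_pair u qc.
  by case: hq => <-; rewrite ?e1 ?e2 ?s1 ?(negbTE s2).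
Qed.

Lemma src_act n (g : 'S_n) (c : seq ('I_n * 'I_n)) h :
  (g h \in cd_src (cd_act g c)) = (h \in cd_src c).
Proof.
rewrite !inE /cd_act -map_comp.
rewrite (_ : (fun p => p.1) \o _ = g \o (fun p => p.1)) // map_comp mem_map //.
exact: perm_inj.
Qed.

Lemma ninv_id m : ninv id m = 0.
Proof.
apply: big1 => a _; apply: big1 => b _.
by case: (ltngtP a b).
Qed.
End Helpers.
Import Helpers.
Import GRing.Theory.
Local Open Scope ring_scope.

Lemma tperm_fix {n} {c : seq ('I_n * 'I_n)} {p q} : uniq (fl c) -> p \in c -> q \in c -> q <> p ->
  tperm p.1 p.2 q.1 = q.1 /\ tperm p.1 p.2 q.2 = q.2.
Proof.
move=> u pc qc qp.
have ne x y : (x == p.1) || (x == p.2) -> (y == q.1) || (y == q.2) -> x != y.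
  move=> hx hy; apply/eqP => E; apply: qp; subst x; apply: (uniq_pair (x := y) u qc pc).
    by rewrite !(eq_sym _ y).
  by rewrite !(eq_sym _ y).
by split; apply: tpermD; apply: ne; rewrite eqxx ?orbT.
Qed.

Theorem lemma5p2 (k : nat) (ks : seq nat) (c : seq ('I_(2 * k) * 'I_(2 * k))) :
  all (fun x => 0 < x)%N ks -> sumn ks = (2 * k)%N -> chord_diagram k c ->
  (* (i) *)
  (forall p, p \in c ->
     Geq (Gamma ks (cd_act (tperm p.1 p.2) c)) (-1) (Gamma ks c))
  /\
  (* (ii) *)
  (forall s : 'S_(2 * k), (forall h : 'I_(2 * k), blk ks (s h) = blk ks h) ->
     Geq (Gamma ks (cd_act s c)) 1 (Gamma ks c))
  /\
  (* (iii) *)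
  (forall (s : 'S_(size ks)) (rho : 'S_(2 * k)),
     let ks' := [seq nth 0%N ks (s t) | t <- enum 'I_(size ks)] in
     (forall (h : 'I_(2 * k)) (t : 'I_(size ks)) (a : nat),
        (a < nth 0%N ks (s t))%N -> val h = (sumn (take t ks') + a)%N ->
        val (rho h) = (sumn (take (s t) ks) + a)%N) ->
     Geq (Gamma ks' (cd_act rho^-1 c)) ((-1) ^+ odd_perm s) (Gamma ks c)).
Proof.
move=> pos sum [sz [u _]].
have u0 : uniq (fl c) := u.
have szf : size (fl c) = (2 * k)%N by rewrite size_fl sz.
have wfX : ograph_wf (Gamma ks c) := wf_Gamma pos sum u0 szf.
have uA (g : 'S_(2 * k)) : uniq (fl (cd_act g c)).
  by rewrite fl_act (map_inj_uniq (@perm_inj _ g)).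
have szA (g : 'S_(2 * k)) : size (fl (cd_act g c)) = (2 * k)%N.
  by rewrite fl_act size_map.
split; [|split].
-
  move=> p pc f Hf.
  set t := tperm p.1 p.2.
  have wfY := wf_Gamma pos sum (uA t) (szA t).
  have giso1 : giso (Gamma ks c) (Gamma ks (cd_act t c)) id id.
    split => //.
    + by exists id.
    + by split => // a b.
    + move=> h /=; have [q qc hq] := cdcover u0 szf h.
      have [e1 e2] := partner_pair u0 qc.
      case: (q =P p) => [E | qp].
        subst q.
        have pc' : (t p.1, t p.2) \in cd_act t c by apply: (map_f (fun p => (t p.1, t p.2))).
        have [f1 f2] := partner_pair (uA t) pc'.
        move: f1 f2; rewrite /= /t tpermL tpermR => f1 f2.
        by case: hq => <-; rewrite ?e1 ?e2 ?f1 ?f2.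
      have [t1 t2] := tperm_fix u0 pc qc qp.
      have qc' : (t q.1, t q.2) \in cd_act t c by apply: (map_f (fun p => (t p.1, t p.2))).
      have [f1 f2] := partner_pair (uA t) qc'.
      move: f1 f2; rewrite /= /t t1 t2 => f1 f2.
      by case: hq => <-; rewrite ?e1 ?e2 ?f1 ?f2.
  rewrite (Hf _ _ _ _ wfX wfY giso1) /gsign_exp /= ninv_id add0n.
  suff -> : [set h in cd_src c | h \notin cd_src (cd_act t c)] = [set p.1].
    by rewrite cards1 expr1.
  apply/setP => h; rewrite !inE.
  apply/idP/idP.
    case/andP => /mapP [q qc ->] hn.
    case: (q =P p) => [-> // | qp]; exfalso; move/negP: hn; apply.
    have [t1 _] := tperm_fix u0 pc qc qp.
    apply/mapP; exists (t q.1, t q.2); last by rewrite /= t1.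
    by apply: (map_f (fun p => (t p.1, t p.2))).
  move/eqP => ->; apply/andP; split; first by apply: map_f.
  apply/mapP => -[q' /mapP [q qc ->] /= E].
  case: (q =P p) => [qp | qp].
    subst q; move: E; rewrite /t tpermL => E.
    by move: (pair_neq u0 pc); rewrite E eqxx.
  have [t1 _] := tperm_fix u0 pc qc qp.
  move: E; rewrite /t t1 => E.
  by apply: qp; apply: (uniq_pair (x := p.1) u0 qc pc); rewrite ?E eqxx.
-
  move=> s hs f Hf.
  have wfY := wf_Gamma pos sum (uA s) (szA s).
  have giso2 : giso (Gamma ks c) (Gamma ks (cd_act s c)) s id.
    split => //.
    + by exists s^-1%g => x; rewrite ?permK ?permKV.
    + by split => // a b.
    + by move=> h /=; rewrite partner_act.
  rewrite (Hf _ _ _ _ wfX wfY giso2) /gsign_exp /= ninv_id add0n.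
  suff -> : [set h in cd_src c | s h \notin cd_src (cd_act s c)] = set0.
    by rewrite cards0 expr0.
  by apply/setP => h; rewrite in_set0 in_set src_act andbN.
-
  move=> s rho ks' Hrho f Hf.
  have szks' : size ks' = size ks by rewrite size_map size_enum_ord.
  have nthks' (t : 'I_(size ks)) : nth 0%N ks' t = nth 0%N ks (s t).
    by rewrite (nth_map t) ?size_enum_ord // nth_ord_enum.
  have sumks' : sumn ks' = (2 * k)%N.
    rewrite -sum sumnE big_map big_enum /=.
    rewrite -[in RHS](mkseq_nth 0%N ks) /mkseq sumnE big_map.
    transitivity (\sum_(i < size ks) nth 0%N ks (s i))%N; first by apply: eq_bigl.
    rewrite -(@reindex_inj _ _ _ _ s xpredT (fun i : 'I_(size ks) => nth 0%N ks i) (@perm_inj _ s)) /=.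
    rewrite -(big_mkord xpredT (fun j => nth 0%N ks j)).
    by rewrite /index_iota subn0.
  have posks' : all (fun x => 0 < x)%N ks'.
    apply/allP => x /mapP [t _ ->]; apply: (allP pos); apply: mem_nth; exact: ltn_ord.
  have wfY := wf_Gamma posks' sumks' (uA rho^-1%g) (szA rho^-1%g).
  pose pi (a : nat) : nat := oapp (fun i : 'I_(size ks) => val (s^-1%g i)) a (insub a).
  have piE (i : 'I_(size ks)) : pi i = s^-1%g i by rewrite /pi valK.
  have giso3 : giso (Gamma ks c) (Gamma ks' (cd_act rho^-1 c)) rho^-1%g pi.
    split.
    + by exists rho => x; rewrite ?permK ?permKV.
    + by rewrite /= szks'.
    + split.
        move=> a b ha hb.
        have ha' : (a < size ks)%N := ha.
        have hb' : (b < size ks)%N := hb.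
        have -> : a = val (Ordinal ha') by [].
        have -> : b = val (Ordinal hb') by [].
        by rewrite !piE => /val_inj /perm_inj ->.
      move=> a ha; rewrite /= szks'.
      have -> : a = val (Ordinal ha) by [].
      by rewrite piE ltn_ord.
    + move=> h /=.
      have gs : (rho^-1%g h < sumn ks')%N by rewrite sumks'.
      have [t0 [a [t0s ta eg]]] := decomp gs.
      have t0s' : (t0 < size ks)%N by rewrite -szks'.
      pose t := Ordinal t0s'.
      have ta' : (a < nth 0%N ks (s t))%N by rewrite -nthks'.
      have := Hrho _ t a ta' eg; rewrite permKV => eh.
      rewrite eg (blk_eq t0s ta) eh (blk_eq (ltn_ord (s t)) ta').
      by rewrite piE permK.
    + by move=> h /=; rewrite partner_act.
  rewrite (Hf _ _ _ _ wfX wfY giso3) /gsign_exp.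
  have -> : [set h in src (Gamma ks c) | rho^-1%g h \notin src (Gamma ks' (cd_act rho^-1 c))] = set0.
    by apply/setP => h; rewrite in_set0 in_set /= src_act andbN.
  rewrite cards0 addn0.
  have -> : ninv pi (nv (Gamma ks c)) = ninvP s^-1%g.
    by apply: eq_bigr => a _; apply: eq_bigr => b _; rewrite !piE.
  by rewrite -signr_odd odd_ninvP odd_permV.
Qed.
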